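(* Let $0<\mu<L_{\max}^{-1}$ with $L_{\max}=\max_i\|A_i\|_2^2$, and let $\{x^n\}$ be generated by GAITA (as in the context) from an arbitrary $x^0\in\mathbf{R}^N$. Then $\{x^n\}$ is bounded, for every $n\in\mathbf{N}$ $$\sum_{k=0}^n\|x^{k+1}-x^k\|_2^2\leq\frac{2\mu}{1-\mu L_{\max}}T_\lambda(x^0),$$ and $\|x^n-x^{n+1}\|_2\to0$ as $n\to\infty$.
   Context: Let $A\in\mathbf{R}^{m\times N}$ have columns $A_1,\dots,A_N$, $y\in\mathbf{R}^m$, $\lambda>0$, $q\in(0,1)$, and $T_\lambda(x)=\frac12\|Ax-y\|_2^2+\lambda\sum_{i=1}^N|x_i|^q$. For a step size $\mu>0$ set $\tau_{\mu,q}=\frac{2-q}{2-2q}(2\lambda\mu(1-q))^{\frac{1}{2-q}}$ and $\eta_{\mu,q}=(2\lambda\mu(1-q))^{\frac{1}{2-q}}$. For $z\in\mathbf{R}$ let $prox_{\mu,\lambda|\cdot|^q}(z)=\arg\min_{v\in\mathbf{R}}\{\frac{(z-v)^2}{2\mu}+\lambda|v|^q\}$ (a single point when $|z|\neq\tau_{\mu,q}$). Define $\mathcal{T}(z,w)$ as the unique element of $prox_{\mu,\lambda|\cdot|^q}(z)$ if $|z|\neq\tau_{\mu,q}$, and, if $|z|=\tau_{\mu,q}$, as $sgn(z)\eta_{\mu,q}$ when $w\neq0$ and $0$ when $w=0$ ($sgn(0)=0$). GAITA: given $x^0\in\mathbf{R}^N$, for $n=0,1,2,\dots$ let $i=(n\bmod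 N)+1$, $z_i^n=x_i^n-\mu A_i^T(Ax^n-y)$, $x_i^{n+1}=\mathcal{T}(z_i^n,x_i^n)$, $x_j^{n+1}=x_j^n$ for $j\neq i$. *)

(* Defs.v *)
From HB Require Import structures.
From mathcomp Require Import all_boot all_order all_algebra.
From mathcomp Require Import all_classical all_reals all_analysis.
Set Implicit Arguments. Unset Strict Implicit. Unset Printing Implicit Defensive.
Import Order.TTheory GRing.Theory Num.Theory.
Import numFieldNormedType.Exports.
Local Open Scope ring_scope.

Section GAITA.
Variable R : realType.

Definition sqnorm (n : nat) (v : 'cV[R]_n) : R := \sum_(j < n) (v j 0) ^+ 2.

Definition colsq (m N : nat) (A : 'M[R]_(m, N)) (i : 'I_N) : R :=
  \sum_(k < m) (A k i) ^+ 2.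

Definition Lmax (m N : nat) (A : 'M[R]_(m, N)) : R :=
  \big[Num.max/0]_(i < N) colsq A i.

Definition Tlam (m N : nat) (A : 'M[R]_(m, N)) (y : 'cV[R]_m) (lam q : R)
  (x : 'cV[R]_N) : R :=
  2^-1 * sqnorm (A *m x - y) + lam * \sum_(i < N) (`|x i 0| `^ q).

Definition tau (mu lam q : R) : R :=
  (2 - q) / (2 - 2 * q) * (2 * lam * mu * (1 - q)) `^ (1 / (2 - q)).

Definition eta (mu lam q : R) : R :=
  (2 * lam * mu * (1 - q)) `^ (1 / (2 - q)).

Definition in_prox (mu lam q z v : R) : Prop :=
  forall w : R,
    (z - v) ^+ 2 / (2 * mu) + lam * (`|v| `^ q)
    <= (z - w) ^+ 2 / (2 * mu) + lam * (`|w| `^ q).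

(* v = T(z, w): the unique prox point when |z| <> tau, and the
   tie-breaking rule when |z| = tau *)
Definition T_rel (mu lam q z w v : R) : Prop :=
  if `|z| != tau mu lam q then in_prox mu lam q z v
  else v = (if w != 0 then Num.sg z * eta mu lam q else 0).

(* the sequence x is generated by GAITA: at step n the coordinate
   i = n mod N (0-based) is updated, the others are kept *)
Definition GAITA_seq (m N : nat) (A : 'M[R]_(m, N)) (y : 'cV[R]_m)
  (mu lam q : R) (x : nat -> 'cV[R]_N) : Prop :=
  forall (n : nat) (j : 'I_N),
    if (nat_of_ord j == (n %% N)%N) then
      let z := x n j 0 - mu * \sum_(k < m) A k j * (A *m x n - y) k 0 in
      T_rel mu lam q z (x n j 0) (x n.+1 j 0)
    else x n.+1 j 0 = x n j 0.

End GAITA.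

(* Main.v *)
Require Import Defs.
From HB Require Import structures.
From mathcomp Require Import all_boot all_order all_algebra.
From mathcomp Require Import all_classical all_reals all_analysis.
Import Order.TTheory GRing.Theory Num.Theory.
Import numFieldNormedType.Exports.
Local Open Scope classical_set_scope.
Local Open Scope ring_scope.
From mathcomp.algebra_tactics Require Import ring lra.
Ltac fld := field; repeat (apply/andP; split); apply: lt0r_neq0; lra.

Section K.
Variable R : realType.

Lemma key_expr (q E a : R) : 0 < q -> q < 1 -> 0 < E -> 0 < a ->
  (1-q)*a^+2 - (2-q)*(E `^ (1/(2-q)))*a + E * a `^ q =
  E `^ (1/(2-q)) * a * ((1-q) * expR (ln a - (1/(2-q)) * ln E)
     + expR ((q-1) * (ln a - (1/(2-q)) * ln E)) - (2-q)).
Proof.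
move=> q0 q1 E0 a0.
have Ee : E `^ (1/(2-q)) = expR (1/(2-q) * ln E) by rewrite /powR gt_eqF.
have ae : a `^ q = expR (q * ln a) by rewrite /powR gt_eqF.
rewrite Ee ae.
set le := 1/(2-q) * ln E.
have q2 : 2 - q != 0 by apply: lt0r_neq0; lra.
have lnE : ln E = (2-q) * le.
  by rewrite /le div1r mulrA mulfV // mul1r.
have -> : E = expR ((2-q) * le) by rewrite -lnE lnK.
have -> : a = expR (ln a) by rewrite lnK.
rewrite expRK.
set la := ln a.
have h1 : expR le * expR la * ((1 - q) * expR (la - le)) = (1-q) * expR la ^+ 2.
  have e1 : expR le * expR (la - le) = expR la by rewrite -expRD; congr expR; ring.
  by rewrite -e1; ring.
have h2 : expR le * expR la * expR ((q - 1) * (la - le)) = expR ((2 - q) * le) * expR (q * la).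
  by rewrite -!expRD; congr expR; ring.
rewrite mulrBr mulrDr h1 h2; ring.
Qed.

Lemma key_ineq (q E a : R) : 0 < q -> q < 1 -> 0 < E -> 0 < a ->
  0 <= (1-q)*a^+2 - (2-q)*(E `^ (1/(2-q)))*a + E * a `^ q.
Proof.
move=> q0 q1 E0 a0; rewrite key_expr //.
apply: mulr_ge0; first by apply: mulr_ge0; [exact: powR_ge0|exact: ltW].
set u := ln a - _.
have := expR_ge1Dx u; have := expR_ge1Dx ((q-1)*u).
have : 0 < 1 - q by lra.
move=> hq h1 h2.
have h3 : (1-q)*(1+u) <= (1-q)*expR u by rewrite ler_pM2l.
lra.
Qed.

Lemma key_eq (q E : R) : 0 < q -> q < 1 -> 0 < E ->
  (1-q)*(E `^ (1/(2-q)))^+2 - (2-q)*(E `^ (1/(2-q)))*(E `^ (1/(2-q))) + E * (E `^ (1/(2-q))) `^ q = 0.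
Proof.
move=> q0 q1 E0; rewrite key_expr //; last exact: powR_gt0.
rewrite ln_powR subrr mulr0 expR0 mulr1; apply/eqP; rewrite mulf_eq0; apply/orP; right.
apply/eqP; ring.
Qed.

Lemma tie_prox (mu lam q z v : R) : 0 < mu -> 0 < lam -> 0 < q -> q < 1 ->
  `|z| = tau mu lam q -> (v = Num.sg z * Defs.eta mu lam q \/ v = 0) ->
  in_prox mu lam q z v.
Proof.
move=> mu0 lam0 q0 q1 hz hv.
set E := 2 * lam * mu * (1 - q).
have E0 : 0 < E by rewrite /E !mulr_gt0 // subr_gt0.
have etaE : Defs.eta mu lam q = E `^ (1/(2-q)) by [].
have tauE : tau mu lam q = (2-q)/(2-2*q) * E `^ (1/(2-q)) by [].
have eta0 : 0 < E `^ (1/(2-q)) by apply: powR_gt0.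
have q2 : 2 - 2 * q != 0 by apply: lt0r_neq0; lra.
have q3 : 1 - q != 0 by apply: lt0r_neq0; lra.
have mu2 : 2 * mu != 0 by apply: lt0r_neq0; lra.
have tau0 : 0 < tau mu lam q.
  by rewrite tauE mulr_gt0 // divr_gt0 //; lra.
have z0 : z != 0 by apply/eqP => z0; move: hz; rewrite z0 normr0 => h; move: tau0; rewrite -h ltxx.
have h0 : forall w : R, (z - 0) ^+ 2 / (2 * mu) + lam * (`|0 : R| `^ q)
    <= (z - w) ^+ 2 / (2 * mu) + lam * (`|w| `^ q).
  move=> w; rewrite -subr_ge0 normr0 powR0 ?gt_eqF //.
  set P := `|w| `^ q.
  have -> : (z - w) ^+ 2 / (2 * mu) + lam * P - ((z - 0) ^+ 2 / (2 * mu) + lam * 0)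
     = (w ^+ 2 - 2 * (z * w) + 2 * mu * lam * P) / (2 * mu) by fld.
  apply: divr_ge0; last lra.
  have zw : z * w <= tau mu lam q * `|w|.
    by rewrite -hz -normrM real_ler_norm // num_real.
  have w2 : w ^+ 2 = `|w| ^+ 2 by rewrite real_normK // num_real.
  have [w0|wn0] := eqVneq w 0.
    rewrite /P w0 normr0 powR0 ?gt_eqF // expr0n /= mulr0 ?mul0r ?mulr0; lra.
  have a0 : 0 < `|w| by rewrite normr_gt0.
  have K := @key_ineq q E `|w| q0 q1 E0 a0.
  have K' : 0 <= `|w| ^+ 2 - 2 * tau mu lam q * `|w| + 2 * mu * lam * P.
    have e : (1-q) * (`|w| ^+ 2 - 2 * tau mu lam q * `|w| + 2 * mu * lam * P)
      = (1-q) * `|w| ^+ 2 - (2-q) * (E `^ (1/(2-q))) * `|w| + E * `|w| `^ q.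
      by rewrite tauE /P /E; fld.
    move: K; rewrite -e pmulr_rge0 //; lra.
  rewrite w2; nra.
case: hv => ->; last by move=> w; have := h0 w; rewrite subr0.
move=> w; apply: le_trans (h0 w).
rewrite -subr_ge0 normr0 powR0 ?gt_eqF // subr0.
rewrite etaE normrM normr_sg z0 /= [1 * `|_|]mul1r ger0_norm; last exact: (ltW eta0).
set e' := E `^ (1/(2-q)).
have zs : z * Num.sg z = tau mu lam q by rewrite -hz mulrC -normrEsg.
have s2 : Num.sg z ^+ 2 = 1.
  by rewrite sqr_sg z0.
have -> : z ^+ 2 / (2 * mu) + lam * 0 - ((z - Num.sg z * e') ^+ 2 / (2 * mu) + lam * e' `^ q)
   = - ((Num.sg z ^+ 2 * e' ^+ 2 - 2 * (z * Num.sg z) * e' + 2 * mu * lam * e' `^ q) / (2 * mu)) by fld.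
rewrite s2 zs.
have e : (1-q) * (e' ^+ 2 - 2 * tau mu lam q * e' + 2 * mu * lam * e' `^ q)
      = (1-q)*e'^+2 - (2-q)*e'*e' + E * e' `^ q.
  by rewrite tauE /E /e'; fld.
have : (1-q) * (e' ^+ 2 - 2 * tau mu lam q * e' + 2 * mu * lam * e' `^ q) = 0.
  by rewrite e; apply: (@key_eq q E).
move/eqP; rewrite mulf_eq0 (negbTE q3) /= => /eqP EE.
by rewrite mul1r EE mul0r oppr0.
Qed.

Lemma T_rel_prox (mu lam q z w v : R) : 0 < mu -> 0 < lam -> 0 < q -> q < 1 ->
  T_rel mu lam q z w v -> in_prox mu lam q z v.
Proof.
move=> mu0 lam0 q0 q1; rewrite /T_rel; case: ifP => // /negbFE/eqP hz ->.
apply: tie_prox => //; case: ifP; by [left|right].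
Qed.

Variables (m N : nat) (A : 'M[R]_(m, N)) (y : 'cV[R]_m).

Lemma resid (x x' : 'cV[R]_N) (i : 'I_N) :
  (forall j, j != i -> x' j 0 = x j 0) -> forall k,
  (A *m x' - y) k 0 = (A *m x - y) k 0 + A k i * (x' i 0 - x i 0).
Proof.
move=> h k; rewrite !mxE (bigD1 i) //= [in RHS](bigD1 i) //=.
rewrite (eq_bigr (fun j => A k j * x j 0)); last by move=> j /h ->.
ring.
Qed.

Lemma sq_update (x x' : 'cV[R]_N) (i : 'I_N) :
  (forall j, j != i -> x' j 0 = x j 0) ->
  sqnorm (A *m x' - y) = sqnorm (A *m x - y)
    + 2 * (x' i 0 - x i 0) * (\sum_(k < m) A k i * (A *m x - y) k 0)
    + (x' i 0 - x i 0) ^+ 2 * colsq A i.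
Proof.
move=> h; rewrite /sqnorm /colsq.
rewrite (eq_bigr (fun k => (A *m x - y) k 0 ^+ 2
   + 2 * (x' i 0 - x i 0) * (A k i * (A *m x - y) k 0)
   + (x' i 0 - x i 0) ^+ 2 * (A k i ^+ 2))); last first.
  by move=> k _; rewrite (@resid x x' i h); ring.
by rewrite !big_split /= -!mulr_sumr.
Qed.

Lemma pen_update (x x' : 'cV[R]_N) (i : 'I_N) (q : R) :
  (forall j, j != i -> x' j 0 = x j 0) ->
  \sum_(j < N) `|x' j 0| `^ q = \sum_(j < N) `|x j 0| `^ q
     - `|x i 0| `^ q + `|x' i 0| `^ q.
Proof.
move=> h; rewrite (bigD1 i) //= [in RHS](bigD1 i) //=.
rewrite (eq_bigr (fun j => `|x j 0| `^ q)); last by move=> j /h ->.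
ring.
Qed.

Lemma descent (x x' : 'cV[R]_N) (i : 'I_N) (mu lam q : R) : 0 < mu ->
  (forall j, j != i -> x' j 0 = x j 0) ->
  in_prox mu lam q (x i 0 - mu * \sum_(k < m) A k i * (A *m x - y) k 0) (x' i 0) ->
  Tlam A y lam q x' + (1 / (2 * mu) - colsq A i / 2) * (x' i 0 - x i 0) ^+ 2
    <= Tlam A y lam q x.
Proof.
move=> mu0 h hp; have := hp (x i 0).
rewrite /Tlam (@sq_update x x' i h) (@pen_update x x' i q h).
set g := \sum_(k < m) A k i * _.
set t := x' i 0 - x i 0.
set S := sqnorm _. set Q := \sum_(j < N) _.
set Pv := `|x' i 0| `^ q. set Px := `|x i 0| `^ q.
have ev : x' i 0 = x i 0 + t by rewrite /t; ring.
rewrite ev.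
have e1 : (x i 0 - mu * g - (x i 0 + t)) ^+ 2 / (2 * mu)
   = mu * g ^+ 2 / 2 + g * t + t ^+ 2 / (2 * mu) by fld.
have e2 : (x i 0 - mu * g - x i 0) ^+ 2 / (2 * mu) = mu * g ^+ 2 / 2 by fld.
rewrite e1 e2 => H.
have e3 : 2^-1 * (S + 2 * t * g + t ^+ 2 * colsq A i) + lam * (Q - Px + Pv) +
  (1 / (2 * mu) - colsq A i / 2) * t ^+ 2
  = 2^-1 * S + lam * Q + (g * t + t ^+ 2 / (2 * mu) + lam * Pv - lam * Px) by fld.
rewrite e3; lra.
Qed.

Lemma sqnorm_ge0 n (v : 'cV[R]_n) : 0 <= sqnorm v.
Proof. by apply: sumr_ge0 => j _; apply: sqr_ge0. Qed.

Lemma colsq_ge0 i : 0 <= colsq A i.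
Proof. by apply: sumr_ge0 => j _; apply: sqr_ge0. Qed.

Lemma colsq_le i : colsq A i <= Lmax A.
Proof. by rewrite /Lmax (bigD1 i) //= le_max lexx. Qed.

Lemma Tlam_ge0 lam q v : 0 <= lam -> 0 <= Tlam A y lam q v.
Proof.
move=> l0; rewrite /Tlam addr_ge0 // ?mulr_ge0 ?sqnorm_ge0 //.
by apply: sumr_ge0 => j _; apply: powR_ge0.
Qed.

Lemma diff_single (x x' : 'cV[R]_N) (i : 'I_N) :
  (forall j, j != i -> x' j 0 = x j 0) ->
  sqnorm (x' - x) = (x' i 0 - x i 0) ^+ 2.
Proof.
move=> h; rewrite /sqnorm (bigD1 i) //= big1 ?addr0 ?mxE //.
by move=> j /h; rewrite !mxE => ->; rewrite subrr expr0n.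
Qed.

Lemma sqnormN n (v : 'cV[R]_n) : sqnorm (- v) = sqnorm v.
Proof. by apply: eq_bigr => j _; rewrite mxE sqrrN. Qed.
End K.

Theorem mainTheorem9 (R : realType) (m N : nat) (A : 'M[R]_(m, N))
  (y : 'cV[R]_m) (lam q mu : R) (x : nat -> 'cV[R]_N) :
  (0 < N)%N -> 0 < lam -> 0 < q -> q < 1 ->
  0 < mu -> mu * Lmax A < 1 ->
  GAITA_seq A y mu lam q x ->
  (exists B : R, forall n, sqnorm (x n) <= B) /\
  (forall n : nat,
     \sum_(k < n.+1) sqnorm (x k.+1 - x k)
       <= 2 * mu / (1 - mu * Lmax A) * Tlam A y lam q (x 0%N)) /\
  ((fun n => Num.sqrt (sqnorm (x n - x n.+1))) @ \oo --> (0 : R)).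
Proof.
move=> N0 lam0 q0 q1 mu0 muL hG.
set L := Lmax A.
have muL' : mu * L < 1 by [].
clear muL.
set T := fun v => Tlam A y lam q v.
have L0 : 0 <= L by apply: le_trans (@colsq_le R m N A (Ordinal N0)); apply: colsq_ge0.
set c := (1 - mu * L) / (2 * mu).
have c0 : 0 < c by apply: divr_gt0; lra.
have step : forall n, T (x n.+1) + c * sqnorm (x n.+1 - x n) <= T (x n).
  move=> n.
  pose i := Ordinal (ltn_pmod n N0).
  have hj : forall j, j != i -> x n.+1 j 0 = x n j 0.
    move=> j ji; have := hG n j.
    have -> : (nat_of_ord j == (n %% N)%N) = false.
      by apply/negbTE; apply: contra ji => /eqP hji; apply/eqP/val_inj.
    done.
  have hp : in_prox mu lam q (x n i 0 - mu * \sum_(k < m) A k i * (A *m x n - y) k 0)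
              (x n.+1 i 0).
    have := hG n i; rewrite /= eqxx /=.
    by apply: T_rel_prox.
  have D := @descent R m N A y (x n) (x n.+1) i mu lam q mu0 hj hp.
  rewrite (@diff_single R N (x n) (x n.+1) i hj).
  have ci : c <= 1 / (2 * mu) - colsq A i / 2.
    have := @colsq_le R m N A i; rewrite /c -/L => h.
    have -> : (1 - mu * L) / (2 * mu) = 1 / (2 * mu) - L / 2 by fld.
    lra.
  have t0 : 0 <= (x n.+1 i 0 - x n i 0) ^+ 2 by apply: sqr_ge0.
  have := ler_wpM2r t0 ci; rewrite /T; lra.
have cum : forall n, T (x n.+1) + c * \sum_(k < n.+1) sqnorm (x k.+1 - x k) <= T (x 0%N).
  elim=> [|n IH]; first by rewrite big_ord1; apply: step.
  rewrite big_ord_recr /= mulrDr.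
  have := step n.+1; lra.
have Tge0 : forall v, 0 <= T v by move=> v; apply: Tlam_ge0; lra.
have Sge0 : forall n, 0 <= \sum_(k < n) sqnorm (x k.+1 - x k).
  by move=> n; apply: sumr_ge0 => k _; apply: sqnorm_ge0.
have sumb : forall n, \sum_(k < n.+1) sqnorm (x k.+1 - x k)
       <= 2 * mu / (1 - mu * L) * T (x 0%N).
  move=> n; rewrite -(ler_pM2l c0).
  have -> : c * (2 * mu / (1 - mu * L) * T (x 0%N)) = T (x 0%N).
    by rewrite /c; fld.
  have := cum n; have := Tge0 (x n.+1); lra.
have Tb : forall n, T (x n) <= T (x 0%N).
  case=> [|n]; first by [].
  have := cum n; have := Sge0 n.+1.
  move=> h1 h2; have : 0 <= c * \sum_(k < n.+1) sqnorm (x k.+1 - x k) by apply: mulr_ge0 => //; lra.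
  lra.
split; last split.
- pose M := (T (x 0%N) / lam) `^ (1 / q).
  exists (M ^+ 2 *+ N) => n.
  rewrite /sqnorm -[N in _ *+ N]card_ord -sumr_const.
  apply: ler_sum => j _.
  have hq : `|x n j 0| `^ q <= T (x 0%N) / lam.
    rewrite ler_pdivlMr // mulrC; apply: le_trans (Tb n).
    rewrite /T /Tlam; set Q := \sum_(i < N) _.
    have : `|x n j 0| `^ q <= Q.
      rewrite /Q (bigD1 j) //= lerDl; apply: sumr_ge0 => i _; apply: powR_ge0.
    have := @sqnorm_ge0 R m (A *m x n - y).
    move=> h1 h2; have h3 : lam * `|x n j 0| `^ q <= lam * Q by rewrite ler_pM2l.
    lra.
  have hM : `|x n j 0| <= M.
    have e : `|x n j 0| = (`|x n j 0| `^ q) `^ (1 / q).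
      by rewrite -powRrM mulrC div1r mulVf ?gt_eqF // powRr1.
    rewrite e /M; apply: ge0_ler_powR => //.
    - by rewrite div1r invr_ge0 ltW.
    - by rewrite nnegrE powR_ge0.
    - by rewrite nnegrE; apply: le_trans hq; apply: powR_ge0.
  rewrite -real_normK ?num_real //.
  have := normr_ge0 (x n j 0); move=> h0; rewrite !expr2; nra.
- by move=> n; apply: sumb.
- set a := fun n => sqnorm (x n - x n.+1).
  have ae : forall n, a n = sqnorm (x n.+1 - x n).
    by move=> n; rewrite /a -opprB sqnormN.
  have a0 : forall n, 0 <= a n by move=> n; apply: sqnorm_ge0.
  have cv : cvgn (series a).
    apply: nondecreasing_is_cvgn.
      move=> k n kn; rewrite /series/=.
      rewrite -(subnKC kn) {2}/index_iota subn0 iotaD big_cat/=.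
      by rewrite add0n -{2}(subn0 k) -/(index_iota _ _) lerDl sumr_ge0.
    exists (2 * mu / (1 - mu * L) * T (x 0%N)) => _ [n _ <-].
    rewrite /series /=.
    case: n => [|n]; first by rewrite big_geq // mulr_ge0 // divr_ge0 //; lra.
    rewrite big_mkord (eq_bigr (fun k : 'I_n.+1 => sqnorm (x k.+1 - x k))).
      exact: sumb.
    by move=> k _; rewrite ae.
  have ha := cvg_series_cvg_0 cv.
  have := continuous_cvg _ (@sqrt_continuous R 0) ha.
  by rewrite sqrtr0; apply.
Qed.
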